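(* Let $X$ be a topological space, $\sigma : X\to X$ a homeomorphism, and $\widetilde{\sigma}(f) = f\circ\sigma^{-1}$ the induced automorphism of $C(X)$. Let $A$ be a non-zero subalgebra of $C(X)$ invariant under $\widetilde{\sigma}$ and $\widetilde{\sigma}^{-1}$, which separates the points of $X$ and is such that every non-empty open set $U\subseteq X$ is a domain of uniqueness for $A$. Then $A$ is maximal abelian in $A\rtimes_{\widetilde{\sigma}}\mathbb{Z}$ if and only if $\sigma$ is not of finite order (i.e. $\sigma^n\neq \mathrm{id}_X$ for every non-zero integer $n$).
   Context: A non-empty subset $S\subseteq X$ is a domain of uniqueness for $A$ if every function in $A$ vanishing on $S$ vanishes on all of $X$. The crossed product $A \rtimes_{\widetilde{\sigma}} \mathbb{Z}$ is the set of finitely supported functions $\mathbb{Z}\to A$, written $\sum_n f_n\delta^n$, with pointwise linear operations and multiplication determined by $(f_n\delta^n)*(g_m\delta^m)=f_n\,\widetilde{\sigma}^n(g_m)\,\delta^{n+m}$; $A$ is embedded as $\{f_0\delta^0\}$. *)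

(* Defs.v *)
(* C(X) = continuous maps X -> R[i],
   with R : realType (so R[i] is the field of complex numbers). *)
From HB Require Import structures.
From mathcomp Require Import all_boot all_order all_algebra.
From mathcomp Require Import all_classical all_reals all_analysis.
From mathcomp Require Export complex.
Export numFieldTopology.Exports.

Set Implicit Arguments.
Unset Strict Implicit.
Unset Printing Implicit Defensive.
Import Order.TTheory GRing.Theory Num.Theory.
Local Open Scope classical_set_scope.
Local Open Scope ring_scope.
Local Open Scope complex_scope.

#[non_forgetful_inheritance]
HB.instance Definition _ (R : rcfType) :=
  PseudoPointedMetric.copy (R[i]) (R[i])^o.

Section Defs.
Variables (R : realType) (X : topologicalType).
Notation C := (R[i]).

Definition zpow (s sinv : X -> X) (n : int) : X -> X :=
  match n with
  | Posz k => iter k s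
  | Negz k => iter k.+1 sinv
  end.

Definition sigt_pow (s sinv : X -> X) (n : int) (f : X -> C) : X -> C :=
  f \o zpow s sinv (- n).

(* A is a (not necessarily unital) complex subalgebra of the functions X -> C *)
Definition is_subalgebra (A : set (X -> C)) : Prop :=
  [/\ A (fun _ => 0),
      (forall f g, A f -> A g -> A (fun x => f x + g x)),
      (forall (c : C) f, A f -> A (fun x => c * f x)) &
      (forall f g, A f -> A g -> A (fun x => f x * g x))].

Definition in_CX (A : set (X -> C)) : Prop := forall f, A f -> continuous f.

Definition nonzero_set (A : set (X -> C)) : Prop :=
  exists f, A f /\ exists x, f x != 0.

Definition separates_points (A : set (X -> C)) : Prop :=
  forall x y : X, x <> y -> exists f, A f /\ f x != f y.

Definition domain_of_uniqueness (A : set (X -> C)) (S : set X) : Prop :=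
  S !=set0 /\
  forall f, A f -> (forall x, S x -> f x = 0) -> forall x, f x = 0.

(* crossed product A x|_{sigma~} Z: finitely supported functions Z -> A,
   an element F stands for sum_n F n delta^n *)
Definition crossed_product (A : set (X -> C)) : set (int -> X -> C) :=
  [set F | finite_set [set n | exists x, F n x != 0] /\ forall n, A (F n)].

(* (sum_n F n delta^n) * (sum_m G m delta^m), coefficient of delta^k is
   sum_n F n * sigma~^n (G (k - n)) *)
Definition cp_mul (s sinv : X -> X) (F G : int -> X -> C) : int -> X -> C :=
  fun k x => \sum_(n \in [set: int]) F n x * sigt_pow s sinv n (G (k - n)) x.

Definition cp_add (F G : int -> X -> C) : int -> X -> C :=
  fun k x => F k x + G k x.

Definition cp_scale (c : C) (F : int -> X -> C) : int -> X -> C :=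
  fun k x => c * F k x.

Definition cp_zero : int -> X -> C := fun _ _ => 0.

Definition cp_emb (f : X -> C) : int -> X -> C :=
  fun n => if n == 0 then f else (fun _ => 0).

Definition cp_subalgebra (s sinv : X -> X) (A : set (X -> C))
    (B : set (int -> X -> C)) : Prop :=
  [/\ B `<=` crossed_product A,
      B cp_zero,
      (forall F G, B F -> B G -> B (cp_add F G)),
      (forall c F, B F -> B (cp_scale c F)) &
      (forall F G, B F -> B G -> B (cp_mul s sinv F G))].

Definition cp_commutative (s sinv : X -> X) (B : set (int -> X -> C)) : Prop :=
  forall F G, B F -> B G -> cp_mul s sinv F G = cp_mul s sinv G F.

Definition maximal_abelian (s sinv : X -> X) (A : set (X -> C)) : Prop :=
  cp_commutative s sinv (cp_emb @` A) /\
  forall B, cp_subalgebra s sinv A B -> cp_emb @` A `<=` B ->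
    cp_commutative s sinv B -> B `<=` cp_emb @` A.

End Defs.

(* Main.v *)
Require Import Defs.
From HB Require Import structures.
From mathcomp Require Import all_boot all_order all_algebra.
From mathcomp Require Import all_classical all_reals all_analysis.
From mathcomp Require Import complex.
From mathcomp Require Import zify.
Import numFieldTopology.Exports.
Import Order.TTheory GRing.Theory Num.Theory.
Local Open Scope classical_set_scope.
Local Open Scope ring_scope.
Local Open Scope complex_scope.

Section Helpers.
Variables (R : realType) (X : topologicalType) (s sinv : X -> X).
Hypotheses (hs1 : cancel s sinv) (hs2 : cancel sinv s).
Local Notation C := (R[i]).
Local Notation zp := (zpow s sinv).

Lemma zpowS (n : int) x : zp (n + 1) x = s (zp n x).
Proof.
case: n => [k|[|k]].
- have -> : Posz k + 1 = Posz k.+1 by rewrite -addn1 PoszD.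
  by [].
- by rewrite /= hs2.
- have -> : Negz k.+1 + 1 = Negz k by rewrite !NegzE; lia.
  by rewrite /= hs2.
Qed.

Lemma zpowP (n : int) x : zp (n - 1) x = sinv (zp n x).
Proof. by rewrite -{2}(subrK 1 n) zpowS hs1. Qed.

Lemma zpowD (a b : int) x : zp (a + b) x = zp a (zp b x).
Proof.
elim/int_rec: a b x => [|n IH|n IH] b x.
- by rewrite add0r.
- have -> : (n.+1%:Z + b) = (n%:Z + b) + 1 by rewrite -addn1 PoszD; lia.
  by rewrite zpowS IH -zpowS -addn1 PoszD.
- have -> : (- n.+1%:Z + b) = (- n%:Z + b) - 1 by rewrite -addn1 PoszD; lia.
  by rewrite zpowP IH -zpowP -addn1 PoszD opprD.
Qed.

Lemma zpow0 x : zp 0 x = x. Proof. by []. Qed.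

Lemma fsum1 (F : int -> C) k : (forall i, i != k -> F i = 0) ->
  \sum_(i \in [set: int]) F i = F k.
Proof.
move=> H; rewrite -(fsbig_widen [set k]) ?fsbig_set1 // => i [_ ik].
by apply: H; apply/eqP.
Qed.

Lemma fsum_seq (F : int -> C) S : finite_set S -> (forall i, ~ S i -> F i = 0) ->
  \sum_(i \in [set: int]) F i = \sum_(i <- finmap.enum_fset (fset_set S)) F i.
Proof.
move=> fS H; rewrite -(fsbig_widen S) //; first exact: fsbig_finite.
by move=> i [_ /H].
Qed.

Lemma fsum_nz (F : int -> C) : \sum_(i \in [set: int]) F i != 0 -> exists i, F i != 0.
Proof.
move=> H; apply: contrapT => H'; move/eqP: H; apply; apply: fsbig1 => i _.
by apply/eqP; apply: contrapT => Hi; apply: H'; exists i; apply/negP.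
Qed.

Lemma sumA (A : set (X -> C)) (hA : is_subalgebra A) (l : seq int) (h : int -> X -> C) :
  (forall a, A (h a)) -> A (fun x => \sum_(a <- l) h a x).
Proof.
case: hA => h0 hadd _ _ Hh; elim: l => [|a l IH].
  by have -> : (fun x => \sum_(a <- [::]) h a x) = (fun _ => 0)
    by apply: funext => x; rewrite big_nil.
have -> : (fun x => \sum_(b <- a :: l) h b x) = (fun x => h a x + \sum_(b <- l) h b x)
  by apply: funext => x; rewrite big_cons.
exact: hadd.
Qed.

Lemma hausC : hausdorff_space C.
Proof. have := @norm_hausdorff _ (C^o). move=> h; exact: h. Qed.

Lemma openNZ : open [set x : C | x != 0].
Proof.
have := closed_openC (accessible_closed_set1 (hausdorff_accessible hausC) (x:=0)).
suff -> : [set x : C | x != 0] = [set~ 0] by [].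
by apply/seteqP; split => x /=; [move/eqP | move=> h; apply/eqP].
Qed.

Lemma compA (A : set (X -> C)) (hinv : forall f, A f -> A (sigt_pow s sinv 1 f) /\ A (sigt_pow s sinv (-1) f)) (m : int) g :
  A g -> A (g \o zp m).
Proof.
have Hs k : forall g, A g -> A (g \o iter k s).
  elim: k => [|k IH] g' Ag; first by [].
  have := IH _ (proj2 (hinv _ Ag)); rewrite /sigt_pow opprK; exact.
have Hi k : forall g, A g -> A (g \o iter k sinv).
  elim: k => [|k IH] g' Ag; first by [].
  have := IH _ (proj1 (hinv _ Ag)); rewrite /sigt_pow; exact.
by case: m => k; [apply: Hs | apply: Hi].
Qed.


Lemma mul_emb_l f (G : int -> X -> C) k x :
  cp_mul s sinv (cp_emb f) G k x = f x * G k x.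
Proof.
rewrite /cp_mul (@fsum1 _ 0) => [|i /negbTE i0]; last by rewrite /cp_emb i0 mul0r.
by rewrite /cp_emb eqxx /sigt_pow oppr0 subr0.
Qed.

Lemma mul_emb_r (F : int -> X -> C) g k x :
  cp_mul s sinv F (cp_emb g) k x = F k x * g (zp (-k) x).
Proof.
rewrite /cp_mul (@fsum1 _ k) => [|i ik]; last first.
  by rewrite /cp_emb /sigt_pow /= subr_eq0 eq_sym (negbTE ik) mulr0.
by rewrite /cp_emb subrr eqxx /sigt_pow.
Qed.

End Helpers.

Theorem theorem3p11 (R : realType) (X : topologicalType)
  (s sinv : X -> X)
  (hs1 : cancel s sinv) (hs2 : cancel sinv s)
  (hsc : continuous s) (hsic : continuous sinv)
  (A : set (X -> R[i]))
  (hA : is_subalgebra A) (hAC : in_CX A) (hA0 : nonzero_set A)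
  (hinv : forall f, A f -> A (sigt_pow s sinv 1 f) /\ A (sigt_pow s sinv (-1) f))
  (hsep : separates_points A)
  (huniq : forall U : set X, open U -> U !=set0 -> domain_of_uniqueness A U) :
  maximal_abelian s sinv A <-> (forall n : int, n != 0 -> zpow s sinv n <> id).
Proof.
have [h0 hadd hscal hmul] := hA.
split.
- move=> [_ Hmax] n n0 Hn.
  pose Q (k : int) := forall x, zpow s sinv (-k) x = x.
  have Qn : Q n.
    move=> x; have := @zpowD X s sinv hs1 hs2 (-n) n x; rewrite addNr Hn /= => e.
    by symmetry.
  pose B := [set F : int -> X -> R[i] | crossed_product A F /\
                 forall k, (exists x, F k x != 0) -> Q k].
  have Bsingle : forall m f, A f -> Q m ->
      B (fun k => if k == m then f else (fun _ => 0)).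
    move=> m f Af Qm; split; [split|].
    + apply: (sub_finite_set (B:=[set m])); last exact: finite_set1.
      move=> k [x]; case: (k =P m) => [-> //|_ /=]; by rewrite eqxx.
    + by move=> k; case: eqP.
    + by move=> k [x]; case: (k =P m) => [->//|_ /=]; rewrite eqxx.
  have conv : forall F G, B F -> B G -> forall k x,
      cp_mul s sinv F G k x = \sum_(a \in [set: int]) F a x * G (k - a) x.
    move=> F G BF BG k x; rewrite /cp_mul; apply: eq_fsbigr => a _.
    rewrite /sigt_pow /=; have [->|Fa] := eqVneq (F a x) 0; first by rewrite !mul0r.
    by rewrite (BF.2 a (ex_intro _ x Fa)).
  have Bsub : cp_subalgebra s sinv A B.
    split.
    + by move=> F [].
    + split; [split|].
      * apply: (sub_finite_set (B:=set0)); last exact: finite_set0.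
        by move=> k [x]; rewrite /cp_zero eqxx.
      * by move=> k.
      * by move=> k [x]; rewrite /cp_zero eqxx.
    + move=> F G [[fF AF] QF] [[fG AG] QG]; split; [split|].
      * apply: (sub_finite_set (B:=[set n | exists x, F n x != 0] `|`
                                    [set n | exists x, G n x != 0])).
          move=> k [x] H; case: (eqVneq (F k x) 0) => [Fk|Fk]; last by left; exists x.
          by right; exists x; move: H; rewrite /cp_add Fk add0r.
        by rewrite finite_setU.
      * by move=> k; apply: hadd.
      * move=> k [x] H; case: (eqVneq (F k x) 0) => [Fk|Fk]; last by apply: QF; exists x.
        by apply: QG; exists x; move: H; rewrite /cp_add Fk add0r.
    + move=> c F [[fF AF] QF]; split; [split|].
      * apply: (sub_finite_set (B:=[set n | exists x, F n x != 0])) => //.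
        move=> k [x] H; exists x; move: H; rewrite /cp_scale; apply: contra_neq => ->; exact: mulr0.
      * by move=> k; apply: hscal.
      * move=> k [x] H; apply: QF; exists x; move: H; rewrite /cp_scale; apply: contra_neq => ->; exact: mulr0.
    + move=> F G BF BG; have [[fF AF] QF] := BF; have [[fG AG] QG] := BG.
      have split_nz : forall k x, cp_mul s sinv F G k x != 0 ->
          exists a, F a x != 0 /\ G (k - a) x != 0.
        move=> k x; rewrite conv // => /fsum_nz [a Ha]; exists a; split.
          by move: Ha; apply: contra_neq => ->; rewrite mul0r.
        by move: Ha; apply: contra_neq => ->; rewrite mulr0.
      split; [split|].
      * apply: (sub_finite_set (B:=[set p.1 + p.2 | p in
           [set n | exists x, F n x != 0] `*` [set n | exists x, G n x != 0]])).
          move=> k [x] /split_nz [a [Fa Ga]]; exists (a, k - a).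
            by split; exists x.
          by rewrite /= addrC subrK.
        exact: finite_image (finite_setX fF fG).
      * move=> k.
        have -> : cp_mul s sinv F G k = fun x => \sum_(a <- finmap.enum_fset
            (fset_set [set n | exists x, F n x != 0])) F a x * G (k - a) x.
          apply: funext => x; rewrite conv // (@fsum_seq R _ _ fF) // => a Sa.
          have /negP/negPn/eqP -> : ~ (F a x != 0) by move=> h; apply: Sa; exists x.
          by rewrite mul0r.
        by apply: sumA => // a; apply: hmul.
      * move=> k [x] /split_nz [a [Fa Ga]] y.
        have -> : - k = - a + - (k - a) by lia.
        by rewrite (@zpowD X s sinv hs1 hs2) (QG (k - a) (ex_intro _ x Ga)) (QF a (ex_intro _ x Fa)).
  have HB : @cp_emb R X @` A `<=` B by move=> _ [g Ag <-]; exact: Bsingle.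
  have Bcomm : cp_commutative s sinv B.
    move=> F G BF BG; apply: funext => k; apply: funext => x; rewrite !conv //.
    rewrite (reindex_fsbigT (fun a => k - a)); last first.
      by exists (fun a => k - a) => a; rewrite opprB addrC subrK.
    apply: eq_fsbigr => a _; rewrite mulrC; congr (_ * _).
    by rewrite opprB addrC subrK.
  have [f [Af [x0 fx0]]] := hA0.
  have := Hmax B Bsub HB Bcomm _ (Bsingle n f Af Qn).
  case=> g Ag /(congr1 (fun H => H n x0)); rewrite /cp_emb /= (negbTE n0) eqxx.
  move=> e; move: fx0; rewrite -e; by rewrite eqxx.
- move=> Hn; split.
    move=> _ _ [f Af <-] [g Ag <-]; apply: funext => k; apply: funext => x.
    rewrite !mul_emb_l /cp_emb; case: eqP => _ /=; [exact: mulrC | by rewrite !mulr0].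
  move=> B [BA B0 Badd Bscal Bmul] HAB Bc F BF.
  have [fF AF] := BA F BF.
  have Fk0 : forall k, k != 0 -> F k = fun _ => 0.
    move=> k k0; apply: funext => x0; apply: contrapT => Fx0.
    have key : forall g, A g -> forall x, g x = g (zpow s sinv (-k) x).
      move=> g Ag.
      have Bg : B (cp_emb g) by apply: HAB; exists g.
      have e : forall x, F k x != 0 -> g x = g (zpow s sinv (-k) x).
        move=> x Fx; have := congr1 (fun H => H k x) (Bc _ _ Bg BF).
        by rewrite /= mul_emb_l mul_emb_r mulrC => /(mulfI Fx).
      pose h := fun x => g x - g (zpow s sinv (-k) x).
      have Ah : A h.
        have -> : h = fun x => g x + (-1) * (g \o zpow s sinv (-k)) x.
          by apply: funext => x; rewrite mulN1r.
        exact: (hadd _ _ Ag (hscal _ _ (@compA R X s sinv A hinv (-k) g Ag))).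
      have U := huniq [set x | F k x != 0] _ _.
      have Uo : open [set x | F k x != 0].
        have := @open_comp _ _ (F k) _ (fun x _ => hAC _ (AF k) x) (@openNZ R); exact.
      have Un : [set x | F k x != 0] !=set0 by exists x0; apply/eqP.
      have hz := (U Uo Un).2 h Ah (fun x Ux => ltac:(by rewrite /h (e x Ux) subrr)).
      by move=> x; apply/eqP; rewrite -subr_eq0; apply/eqP; exact: hz x.
    apply: (Hn (-k)); first by rewrite oppr_eq0.
    apply: funext => x; apply: contrapT => ne; have [g [Ag gne]] := hsep _ _ ne.
    by move: gne; rewrite -key // eqxx.
  exists (F 0) => //; apply: funext => k; rewrite /cp_emb.
  by case: eqP => [->//|/eqP k0]; rewrite Fk0.
Qed.
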